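(* Let $(Y,d)$ be a metric space and let $k:Y\times Y\to[0,+\infty)$ be a positive, symmetric, bounded kernel such that the family $\{k(\cdot,y): y\in Y\}$ is uniformly equicontinuous on $(Y,d)$. Then $A(Y)=R(Y)\neq\emptyset$.
   Context: For a regular Borel probability measure $\mu$ on $Y$ (metric topology) the potential is $U^\mu(x)=\int_Y k(x,y)\,d\mu(y)$, and $A(\mu,Y):=\overline{\mathrm{conv}}\{U^\mu(x):x\in Y\}=[\inf_Y U^\mu,\sup_Y U^\mu]$. Let $\mathfrak{M}_1(Y)$ be the set of regular Borel probability measures on $Y$ and $\mathfrak{M}_1^{\#}(Y)$ those with finite support. The average set is $A(Y):=\bigcap_{\mu\in\mathfrak{M}_1(Y)}A(\mu,Y)$ and the rendezvous set is $R(Y):=\bigcap_{n\in\mathbb{N}}\bigcap_{w_1,\dots,w_n\in Y}A(\frac1n\sum_{j=1}^n\delta_{w_j},Y)$, which equals $\bigcap_{\mu\in\mathfrak{M}_1^{\#}(Y)}A(\mu,Y)$. *)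

(* Defs.v *)
From HB Require Import structures.
From mathcomp Require Import all_boot all_order all_algebra.
From mathcomp Require Import all_classical all_reals all_analysis.
Set Implicit Arguments. Unset Strict Implicit. Unset Printing Implicit Defensive.
Import Order.TTheory GRing.Theory Num.Theory.
Local Open Scope classical_set_scope.
Local Open Scope ring_scope.

Section Defs.
Variables (R : realType) (Y : pointedType) (d : Y -> Y -> R).

Definition is_metric : Prop :=
  [/\ forall x y, 0 <= d x y,
      forall x y, d x y = 0 <-> x = y,
      forall x y, d x y = d y x &
      forall x y z, d x z <= d x y + d y z].

Definition dopen (U : set Y) : Prop :=
  forall x, U x -> exists2 e : R, 0 < e & forall y, d x y < e -> U y.

Definition dcompact (K : set Y) : Prop :=
  forall (I : Type) (F : I -> set Y), (forall i, dopen (F i)) ->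
    K `<=` \bigcup_i F i ->
    exists J : set I, finite_set J /\ K `<=` \bigcup_(i in J) F i.

Definition borelY := g_sigma_algebraType dopen.

Definition regular (mu : probability borelY R) : Prop :=
  forall B : set borelY, measurable B ->
    mu B = ereal_sup [set mu K | K in [set K : set borelY | dcompact K /\ K `<=` B]]
    /\ mu B = ereal_inf [set mu G | G in [set G : set borelY | dopen G /\ B `<=` G]].

Variable k : Y -> Y -> R.

Definition potential (mu : probability borelY R) (x : Y) : R :=
  fine (\int[mu]_(y in setT) (k x y)%:E)%E.

(* closed convex hull of the range of a (bounded) real function on Y *)
Definition hull (U : Y -> R) : set R :=
  [set r | inf (range U) <= r <= sup (range U)].

Definition Ameas (mu : probability borelY R) : set R := hull (potential mu).

Definition average_set : set R :=
  [set r | forall mu : probability borelY R, regular mu -> Ameas mu r].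

(* potential of the discrete measure (1/n) sum_j delta_{w_j} *)
Definition disc_potential (n : nat) (w : 'I_n -> Y) (x : Y) : R :=
  n%:R^-1 * \sum_(j < n) k x (w j).

Definition rendezvous_set : set R :=
  [set r | forall (n : nat) (w : 'I_n -> Y), (0 < n)%N -> hull (disc_potential w) r].

End Defs.

(* Main.v *)
Require Import Defs.
From HB Require Import structures.
From mathcomp Require Import all_boot all_order all_algebra.
From mathcomp Require Import all_classical all_reals all_analysis.
From mathcomp Require Import lra measurable_realfun.
Import Order.TTheory GRing.Theory Num.Theory.
Local Open Scope classical_set_scope.
Local Open Scope ring_scope.
Set Implicit Arguments. Unset Strict Implicit. Unset Printing Implicit Defensive.
Lemma final_ineq (R : realType) (A B Qr kp N P m M eps : R) : 0 < N -> 0 <= N * A - B -> N * A - B <= M * m -> m <= eps * N -> 0 <= M -> 0 <= kp -> kp <= M -> Qr <= N -> N * P - m <= Qr -> 1 - eps <= P -> `|N * A - (B + (N - Qr) * kp)| <= 2 * M * eps * N.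
Proof.
move=> N0 h1 h2 h3 M0 k1 k2 q1 q2 p1.
have e1 : 0 <= N - Qr by lra.
have e2 : N - Qr <= 2 * eps * N by nra.
have e3 : (N - Qr) * kp <= (2 * eps * N) * M by apply: ler_pM.
have e4 : 0 <= (N - Qr) * kp by apply: mulr_ge0.
have e5 : M * m <= M * (eps * N) by apply: ler_wpM2l.
rewrite ler_norml; apply/andP; split; lra.
Qed.

Lemma div_aux (R : realType) (A X N c : R) : 0 < N -> `|N * A - X| <= c * N ->
  `|A - N^-1 * X| <= c.
Proof.
move=> N0 h; rewrite -[A](mulKf (lt0r_neq0 N0)) -mulrBr normrM.
by rewrite gtr0_norm ?invr_gt0 // mulrC ler_pdivrMr.
Qed.
Section Disc.
Variables (R : realType) (Y : pointedType) (d : Y -> Y -> R).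
Notation T := (borelY d).

Definition wn (n : nat) (w : 'I_n -> Y) (i : nat) : T :=
  if (insub i : option 'I_n) is Some j then w j else point.

Lemma wnE n (w : 'I_n -> Y) (j : 'I_n) : wn w j = w j.
Proof. by rewrite /wn valK. Qed.

Definition dmeas n (w : 'I_n -> Y) := msum (fun i => @dirac _ T (wn w i) R) n.

Notation unif n w := (mnormalize (dmeas w) (@dirac _ T point R)).

Lemma dmeasE n (w : 'I_n -> Y) A :
  dmeas w A = (\sum_(j < n) (w j \in A)%:R)%:E.
Proof.
rewrite /dmeas /msum /= -sumEFin; apply: eq_bigr => j _.
by rewrite diracE wnE.
Qed.

Lemma unifE n (w : 'I_n -> Y) A : (0 < n)%N ->
  unif n w A = (n%:R^-1 * \sum_(j < n) (w j \in A)%:R)%:E.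
Proof.
move=> n0; rewrite /mnormalize /= -[msum _ n]/(dmeas w) !dmeasE.
have -> : \sum_(j < n) (w j \in [set: T])%:R = n%:R :> R.
  by under eq_bigr do rewrite in_setT; rewrite sumr_const card_ord.
have -> : ((n%:R : R)%:E == 0)%E = false by rewrite eqe pnatr_eq0; case: n n0 {w A}.
by rewrite /= dmeasE -EFinM mulrC.
Qed.

End Disc.
Section Reg.
Variables (R : realType) (Y : pointedType) (d : Y -> Y -> R).
Hypothesis hd : is_metric d.
Notation T := (borelY d).
Notation unif n w := (mnormalize (@dmeas R Y d n w) (@dirac _ (borelY d) point R)).

Lemma unif_regular n (w : 'I_n -> Y) : (0 < n)%N -> regular (unif n w).
Proof.
move=> n0 B mB; case: hd => d0 deq dsym dtri.
have mono (A A' : set T) : A `<=` A' -> (unif n w A <= unif n w A')%E.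
  move=> AA'; rewrite !unifE // lee_fin ler_wpM2l ?invr_ge0 ?ler0n //.
  apply: ler_sum => j _; case: (boolP (w j \in A)) => h; last by rewrite ler0n.
  by rewrite (mem_set (AA' _ (set_mem h))).
have eqv (A A' : set T) : (forall j, A (w j) <-> A' (w j)) -> unif n w A = unif n w A'.
  move=> hA; rewrite !unifE //; congr (_ * _)%:E; apply: eq_bigr => j _.
  rewrite (_ : (w j \in A) = (w j \in A')) //.
  by apply/idP/idP => /set_mem/(hA j)/mem_set.
split.
- pose K0 := [set y : T | B y /\ exists j, w j = y].
  apply/eqP; rewrite eq_le; apply/andP; split.
    have hBK : unif n w B = unif n w K0.
      apply: eqv => j; split; [by move=> h; split => //; exists j|by case].
    apply: le_trans (_ : (_ <= unif n w K0)%E) _; first by rewrite le_eqVlt; apply/orP; left; apply/eqP; exact: hBK.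
    apply: ereal_sup_ubound; exists K0 => //; split; last by move=> y [].
    move=> I F Fo K0cov.
    case: (pselect (exists i : I, True)) => [[i0 _]|noI].
      have : forall j : 'I_n, exists i, B (w j) -> F i (w j).
        move=> j; case: (pselect (B (w j))) => Bj; last by exists i0.
        have [i _ Fi] := K0cov (w j) (conj Bj (ex_intro _ j erefl)).
        by exists i.
      move/choice => [g hg]; exists (g @` setT); split.
        exact: finite_image finite_finset.
      move=> y [By [j wy]]; subst y; exists (g j).
        by exists j.
      exact: hg.
    exists set0; split; first exact: finite_set0.
    move=> y [By [j wj]]; have [i _ _] := K0cov y (conj By (ex_intro _ j wj)).
    by exfalso; apply: noI; exists i.
  by apply: ge_ereal_sup => _ [K [_ KB] <-]; exact: mono.
- pose G0 := [set y : T | B y \/ forall j, w j <> y].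
  apply/eqP; rewrite eq_le; apply/andP; split; last first.
    have hBG : unif n w B = unif n w G0.
      apply: eqv => j; split; [by left|by case => // /(_ j)].
    apply: le_trans (_ : (_ <= unif n w G0)%E) _; last by rewrite le_eqVlt; apply/orP; left; apply/eqP; exact: (esym hBG).
    apply: ereal_inf_lbound; exists G0 => //; split; last by move=> y By; left.
    move=> x Gx.
    pose e := \big[Order.min/1]_(j < n | ~~ (w j \in B)) d x (w j).
    exists e.
      apply: lt_bigmin => // j /negP nB; rewrite lt_neqAle d0 andbT.
      apply/eqP => /esym/deq xw; subst x; case: Gx => [Bw|/(_ j)//].
      by apply: nB; exact: mem_set.
    move=> y dxy; case: (pselect (B y)) => [By|nBy]; [by left|right].
    move=> j wjy; subst y.
    have : e <= d x (w j) by apply: bigmin_le_cond; apply/negP => /set_mem.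
    by rewrite leNgt dxy.
  by apply: le_ereal_inf_tmp => _ [G [_ BG] <-]; exact: mono.
Qed.

End Reg.
Section S.
Variables (R : realType) (Y : pointedType) (d k : Y -> Y -> R) (M : R).
Hypotheses (hd : is_metric d) (k0 : forall x y, 0 <= k x y)
  (ksym : forall x y, k x y = k y x) (kM : forall x y, k x y <= M)
  (keq : forall e : R, 0 < e -> exists2 delta : R, 0 < delta &
     forall x x' y, d x x' < delta -> `|k x y - k x' y| < e).

Notation T := (borelY d).

Lemma M0 : 0 <= M.
Proof. exact: (le_trans (k0 point point) (kM point point)). Qed.

Lemma kopen x r : dopen d [set y | r < k x y].
Proof.
move=> y /= ry; have hp : 0 < k x y - r by rewrite subr_gt0.
have [del del0 hdel] := keq hp.
exists del => // y' dyy'; have := hdel y y' x dyy'.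
rewrite !(ksym _ x) => h; have := ler_norm (k x y - k x y'); lra.
Qed.

Lemma meas_k x : measurable_fun [set: T] (EFin \o k x).
Proof.
apply/measurable_EFinP.
apply: (measurability _ (RGenOInfty.measurableE R)) => //.
move=> /= _ [_ [r ->] <-]; apply: measurableI => //.
apply: sub_sigma_algebra; rewrite /preimage /=.
suff -> : [set t | `]r, +oo[%classic (k x t)] = [set y | r < k x y] by exact: kopen.
by apply/seteqP; split => t /=; rewrite in_itv /= andbT.
Qed.


Notation unif n w := (mnormalize (@dmeas R Y d n w) (@dirac _ (borelY d) point R)).

Lemma unif_pot n (w : 'I_n -> Y) x : (0 < n)%N ->
  potential k (unif n w) x = disc_potential k w x.
Proof.
move=> n0; rewrite /potential /disc_potential.
have c0 : (0 <= n%:R^-1 :> R) by rewrite invr_ge0 ler0n.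
rewrite (eq_measure_integral (mscale (NngNum c0) (@dmeas R Y d n w))); last first.
  move=> A _ _; apply: (eq_trans (unifE w A n0)).
  transitivity ((n%:R^-1)%:E * dmeas w A)%E; last by [].
  by rewrite dmeasE -EFinM.
transitivity (fine ((n%:R^-1)%:E * \int[@dmeas R Y d n w]_(y in setT) (k x y)%:E))%E.
  by congr fine; apply: (ge0_integral_mscale (@dmeas R Y d n w) measurableT (NngNum c0) (meas_k x)) => y _; rewrite lee_fin.
rewrite (ge0_integral_measure_sum _ measurableT _ (meas_k x)); last by move=> y _; rewrite lee_fin.
under eq_bigr do rewrite (integral_dirac _ measurableT (meas_k x)) diracE in_setT mul1e wnE.
by rewrite sumEFin -EFinM.
Qed.

Lemma A_sub_R : average_set d k `<=` rendezvous_set k.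
Proof.
move=> r Ar n w n0; have := Ar (unif n w) (unif_regular hd w n0).
rewrite /Ameas; congr (hull _ r); apply/funext => x; exact: unif_pot.
Qed.


Lemma inv_lt1 (a c : R) : 0 < a -> 1 < a * c -> a^-1 < c.
Proof. move=> ha hac; have hab : a * a^-1 = 1 by rewrite mulfV // gt_eqF.
move: (a^-1) hab => b hab; nra. Qed.

Lemma inv_lt2 (a c : R) : 0 < a -> a^-1 < c -> 1 < a * c.
Proof. move=> ha hac; have hab : a * a^-1 = 1 by rewrite mulfV // gt_eqF.
move: (a^-1) hab hac => b hab hac; nra. Qed.

Lemma tri_aux (u v w e : R) : v < u - e -> u <= w + v -> e < w.
Proof. lra. Qed.

Lemma inv_lt4 (a c : R) : 0 < a -> c < a^-1 -> a * c < 1.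
Proof. move=> ha hac; have hab : a * a^-1 = 1 by rewrite mulfV // gt_eqF.
move: (a^-1) hab hac => b hab hac; nra. Qed.

Lemma ball_open c r : dopen d [set y | d c y < r].
Proof.
case: hd => d0 deq dsym dtri.
move=> y /= cy; exists (r - d c y); first by rewrite subr_gt0.
move=> y' yy'; have := dtri c y y'; lra.
Qed.

Lemma compact_meas (K : set T) : dcompact d K -> measurable K.
Proof.
case: hd => d0 deq dsym dtri cK.
rewrite -[K]setCK; apply: measurableC; apply: sub_sigma_algebra.
move=> x nKx.
pose F (n : nat) := [set y : Y | 1 < n.+1%:R * d x y].
have Fo n : dopen d (F n).
  pose a : R := n.+1%:R.
  have hn : 0 < a by [].
  move=> y /= Fy; exists (d x y - a^-1).
    by rewrite subr_gt0; apply: inv_lt1.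
  move=> y' yy' /=; have := dtri x y' y.
  rewrite (dsym y' y) => h; apply: (@inv_lt2 a) => //.
  exact: (tri_aux yy' h).
have cov : K `<=` \bigcup_n F n.
  move=> y Ky; have dxy : 0 < d x y.
    rewrite lt_neqAle d0 andbT; apply/eqP => /esym/deq xy; subst y; exact: nKx.
  exists (Num.truncn (d x y)^-1) => //=.
  have := truncnS_gt (d x y)^-1.
  by move: (Num.truncn _) => m hm; rewrite /F /= mulrC; apply: inv_lt2.
have [J [fJ KJ]] := cK nat F Fo cov.
have [s Js] := (finite_seqP J).1 fJ; subst J.
pose N := (\max_(j <- s) j)%N.
exists N.+1%:R^-1; first by rewrite invr_gt0.
move=> y dxy Ky; have [j /= js Fj] := KJ y Ky.
have jN : (j <= N)%N by apply: (leq_bigmax_seq (F := id)).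
move: Fj; rewrite /F /=.
have : j.+1%:R * d x y <= N.+1%:R * d x y.
  by rewrite ler_wpM2r ?d0 // ler_nat ltnS.
have : N.+1%:R * d x y < 1.
  exact: inv_lt4.
lra.
Qed.


Section Meas.
Variable mu : probability T R.

Definition Ik (D : set T) x := fine (\int[mu]_(y in D) (k x y)%:E).
Definition mm (D : set T) := fine (mu D).

Lemma mu_fin (D : set T) : measurable D -> mu D \is a fin_num.
Proof.
move=> mD; rewrite ge0_fin_numE ?measure_ge0 //.
exact: (le_lt_trans (probability_le1 mu mD) (ltry 1)).
Qed.

Lemma mm_ge0 D : 0 <= mm D.
Proof. exact/fine_ge0/measure_ge0. Qed.

Lemma mm_le1 D : measurable D -> mm D <= 1.
Proof.
move=> mD; rewrite -lee_fin /mm fineK ?mu_fin //; exact: probability_le1.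
Qed.

Lemma mkD x (D : set T) : measurable_fun D (fun y => (k x y)%:E).
Proof. exact: (measurable_funTS (meas_k x)). Qed.

Lemma int_le_cst (D : set T) x (b : R) : measurable D ->
  (forall y, D y -> k x y <= b) ->
  (\int[mu]_(y in D) (k x y)%:E <= b%:E * mu D)%E.
Proof.
move=> mD hb; rewrite -integral_cst //.
apply: ge0_le_integral => //; try exact: mkD; try exact: measurable_cst.
by move=> y _; rewrite lee_fin.
Qed.

Lemma cst_le_int (D : set T) x (a : R) : measurable D -> 0 <= a ->
  (forall y, D y -> a <= k x y) ->
  (a%:E * mu D <= \int[mu]_(y in D) (k x y)%:E)%E.
Proof.
move=> mD a0 ha; rewrite -integral_cst //.
apply: ge0_le_integral => //; try exact: mkD; try exact: measurable_cst.

Qed.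

Lemma int_fin (D : set T) x : measurable D ->
  (\int[mu]_(y in D) (k x y)%:E)%E \is a fin_num.
Proof.
move=> mD; rewrite ge0_fin_numE; last by apply: integral_ge0 => y _; rewrite lee_fin.
apply: (le_lt_trans (int_le_cst mD (fun y _ => kM x y))).
by rewrite -(fineK (mu_fin mD)) -EFinM ltry.
Qed.

Lemma Ik_bounds (D : set T) x (a b : R) : measurable D -> 0 <= a ->
  (forall y, D y -> a <= k x y <= b) -> a * mm D <= Ik D x <= b * mm D.
Proof.
move=> mD a0 hab; apply/andP; split.
- rewrite -lee_fin /Ik /mm fineK ?int_fin // EFinM fineK ?mu_fin //.
  by apply: cst_le_int => // y /hab /andP[].
- rewrite -lee_fin /Ik /mm fineK ?int_fin // EFinM fineK ?mu_fin //.
  by apply: int_le_cst => // y /hab /andP[].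
Qed.

Lemma Ik_add (D1 D2 : set T) x : measurable D1 -> measurable D2 ->
  D1 `&` D2 = set0 -> Ik (D1 `|` D2) x = Ik D1 x + Ik D2 x.
Proof.
move=> m1 m2 dis; rewrite /Ik ge0_integral_setU //.
- by rewrite fineD ?int_fin.
- exact: mkD.
- by move=> y _; rewrite lee_fin.
- by rewrite disj_set2E dis.
Qed.

Lemma mm_add (D1 D2 : set T) : measurable D1 -> measurable D2 ->
  D1 `&` D2 = set0 -> mm (D1 `|` D2) = mm D1 + mm D2.
Proof.
move=> m1 m2 dis; rewrite /mm measureU //; by rewrite fineD ?mu_fin.
Qed.


Lemma approx_cs (eps del : R)
  (hdel : forall x c y, d c y < del -> `|k x y - k x c| <= eps) (cs : seq Y) :
  forall D : set T, measurable D ->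
  D `<=` [set y | exists2 c, c \in cs & d c y < del] ->
  exists s : seq (Y * R), [/\ forall z, z \in s -> 0 <= z.2,
     \sum_(z <- s) z.2 = mm D &
     forall x, `|Ik D x - \sum_(z <- s) z.2 * k x z.1| <= eps * mm D].
Proof.
elim: cs => [|c cs IH] D mD Dsub.
  have D0 : D = set0 by apply/seteqP; split => // y /Dsub [c]; rewrite in_nil.
  subst D; exists [::]; split => //.
  - by rewrite big_nil /mm measure0.
  - by move=> x; rewrite big_nil /Ik integral_set0 /mm measure0 /= subr0 normr0 mulr0.
have mB : measurable [set y : T | d c y < del] by apply: sub_sigma_algebra; exact: ball_open.
have m1 : measurable (D `&` [set y : T | d c y < del]) by exact: measurableI.
have m2 : measurable (D `\` [set y : T | d c y < del]) by exact: measurableD.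
have sub2 : D `\` [set y : T | d c y < del] `<=` [set y | exists2 c, c \in cs & d c y < del].
  move=> y [Dy nBy]; have [c' c'in dc'] := Dsub y Dy.
  move: c'in; rewrite inE => /orP [/eqP ceq | c'cs]; first by subst c'.
  by exists c'.
have [s [s0 ssum sapx]] := IH _ m2 sub2.
have DE : D = (D `&` [set y : T | d c y < del]) `|` (D `\` [set y : T | d c y < del]).
  by rewrite setUIDK.
have dis : (D `&` [set y : T | d c y < del]) `&` (D `\` [set y : T | d c y < del]) = set0.
  by apply/seteqP; split => // y [[_ By] [_ nBy]].
have mmD : mm D = mm (D `&` [set y : T | d c y < del]) + mm (D `\` [set y : T | d c y < del]).
  by rewrite -mm_add // -DE.
have IkD x : Ik D x = Ik (D `&` [set y : T | d c y < del]) x + Ik (D `\` [set y : T | d c y < del]) x.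
  by rewrite -Ik_add // -DE.
exists ((c, mm (D `&` [set y : T | d c y < del])) :: s); split.
- move=> z; rewrite inE => /orP [/eqP -> | /s0 //]; exact: mm_ge0.
- by rewrite big_cons ssum /= mmD.
- move=> x; rewrite big_cons /= IkD mmD.
  set D1 := D `&` _; set D2 := D `\` _.
  have b1 : `|Ik D1 x - mm D1 * k x c| <= eps * mm D1.
    have hb := @Ik_bounds D1 x (Num.max 0 (k x c - eps)) (k x c + eps) m1.
    have h0 : 0 <= Num.max 0 (k x c - eps) by rewrite le_max lexx.
    have hy : forall y, D1 y -> Num.max 0 (k x c - eps) <= k x y <= k x c + eps.
      move=> y [Dy By]; have := hdel x c y By; rewrite ler_norml => /andP[h1 h2].
      rewrite ge_max k0 /=; apply/andP; split; lra.
    have /andP[hl hu] := hb h0 hy.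
    have hm := mm_ge0 D1.
    have hmax : (k x c - eps) * mm D1 <= Num.max 0 (k x c - eps) * mm D1.
      by rewrite ler_wpM2r // le_max lexx orbT.
    rewrite ler_norml; apply/andP; split; nra.
  have b2 := sapx x.
  rewrite (_ : Ik D1 x + Ik D2 x - (mm D1 * k x c + \sum_(z <- s) z.2 * k x z.1) =
     (Ik D1 x - mm D1 * k x c) + (Ik D2 x - \sum_(z <- s) z.2 * k x z.1)); last by lra.
  by apply: le_trans (ler_normD _ _) _; rewrite mulrDr; exact: lerD b1 b2.
Qed.

End Meas.


Lemma sum_const_seq (s : seq (Y * R)) (c : R) : \sum_(z <- s) c = c * (size s)%:R.
Proof.
elim: s => [|z s IH]; first by rewrite big_nil mulr0.
by rewrite big_cons IH /= -addn1 natrD mulrDr mulr1 addrC.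
Qed.

Lemma sum_nseq (c : Y) (n : nat) (g : Y -> R) :
  \sum_(y <- nseq n c) g y = n%:R * g c.
Proof.
elim: n => [|n IH]; first by rewrite big_nil mul0r.
by rewrite /= big_cons IH -addn1 natrD mulrDl mul1r addrC.
Qed.

Lemma size_fl (s : seq (Y * R)) (q : Y * R -> nat) :
  size (flatten [seq nseq (q z) z.1 | z <- s]) = (\sum_(z <- s) q z)%N.
Proof.
by elim: s => [|z s IH]; rewrite ?big_nil //= size_cat size_nseq IH big_cons.
Qed.

Lemma sum_fl (s : seq (Y * R)) (q : Y * R -> nat) (g : Y -> R) :
  \sum_(y <- flatten [seq nseq (q z) z.1 | z <- s]) g y =
  \sum_(z <- s) (q z)%:R * g z.1.
Proof.
elim: s => [|z s IH]; first by rewrite !big_nil.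
by rewrite /= big_cat IH sum_nseq big_cons.
Qed.



Lemma round (s : seq (Y * R)) (eps : R) : 0 < eps ->
  (forall z, z \in s -> 0 <= z.2) -> 1 - eps <= \sum_(z <- s) z.2 <= 1 ->
  exists n (w : 'I_n -> Y), (0 < n)%N /\ forall x,
    `|\sum_(z <- s) z.2 * k x z.1 - disc_potential k w x| <= 2 * M * eps.
Proof.
move=> e0 s0 /andP[P1 P2].
have [N [N0 mN]] : exists N : nat, (0 < N)%N /\ (size s)%:R <= eps * N%:R.
  exists (Num.truncn ((size s)%:R / eps)).+1; split => //.
  have := truncnS_gt ((size s)%:R / eps).
  move: (Num.truncn _).+1 => n hn.
  rewrite mulrC -ler_pdivrMr //; exact: ltW.
have NR : 0 < N%:R :> R by rewrite ltr0n.
have qb z : z \in s -> (Num.truncn (N%:R * z.2))%:R <= N%:R * z.2 < (Num.truncn (N%:R * z.2))%:R + 1.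
  move=> zs; rewrite natr1; apply: truncn_itv; apply: mulr_ge0; [exact: ltW|exact: s0].
have Qle : (\sum_(z <- s) Num.truncn (N%:R * z.2))%:R <= N%:R :> R.
  rewrite natr_sum; apply: le_trans (_ : \sum_(z <- s) N%:R * z.2 <= _).
    rewrite big_seq [leRHS]big_seq; apply: ler_sum => z zs.
    by have /andP[] := qb z zs.
  by rewrite -mulr_sumr ler_piMr // ltW.
have QN : (\sum_(z <- s) Num.truncn (N%:R * z.2) <= N)%N by rewrite -(ler_nat R).
have Qge : N%:R * (\sum_(z <- s) z.2) - (size s)%:R <=
    (\sum_(z <- s) Num.truncn (N%:R * z.2))%:R :> R.
  rewrite natr_sum mulr_sumr -[(size s)%:R]mul1r -(sum_const_seq s 1) -sumrB.
  rewrite big_seq [leRHS]big_seq; apply: ler_sum => z zs.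
  by have /andP[_ h] := qb z zs; rewrite lerBlDr ltW.
pose ws := flatten [seq nseq (Num.truncn (N%:R * z.2)) z.1 | z <- s] ++
  nseq (N - \sum_(z <- s) Num.truncn (N%:R * z.2)) point.
have sws : size ws = N by rewrite size_cat size_fl size_nseq subnKC.
exists (size ws), (fun j : 'I_(size ws) => nth point ws j); split.
  by rewrite sws.
move=> x.
rewrite /disc_potential.
rewrite -(big_mkord xpredT (fun j => k x (nth point ws j))) -(big_nth point xpredT (k x)).
rewrite big_cat sum_fl sum_nseq sws natrB //=.
have [hA1 hA2] : 0 <= N%:R * (\sum_(z <- s) z.2 * k x z.1) -
      \sum_(z <- s) (Num.truncn (N%:R * z.2))%:R * k x z.1 /\
    N%:R * (\sum_(z <- s) z.2 * k x z.1) -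
      \sum_(z <- s) (Num.truncn (N%:R * z.2))%:R * k x z.1 <= M * (size s)%:R.
  rewrite mulr_sumr -sumrB -sum_const_seq; split.
    rewrite big_seq; apply: sumr_ge0 => z zs.
    have /andP[h1 h2] := qb z zs; have := k0 x z.1.
    move: (k x z.1) (Num.truncn _)%:R h1 h2 => a b h1 h2 ha; nra.
  rewrite big_seq [leRHS]big_seq; apply: ler_sum => z zs.
  have /andP[h1 h2] := qb z zs; have := k0 x z.1; have := kM x z.1.
  move: (k x z.1) (Num.truncn _)%:R h1 h2 => a b h1 h2 ha hb; nra.
apply: div_aux => //.

apply: (final_ineq (P := \sum_(z <- s) z.2) (m := (size s)%:R)) => //; try exact: M0; try exact: k0; try exact: kM.
Qed.


Lemma approx (mu : probability T R) : regular mu -> forall eps, 0 < eps ->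
  exists n (w : 'I_n -> Y), (0 < n)%N /\ forall x,
    `|potential k mu x - disc_potential k w x| <= eps + M * eps + 2 * M * eps.
Proof.
move=> reg eps e0; case: (hd) => d0 deq dsym dtri.
have [del del0 hdel0] := keq e0.
have hdel : forall x c y, d c y < del -> `|k x y - k x c| <= eps.
  move=> x c y dcy; have := hdel0 c y x dcy.
  by rewrite (ksym c x) (ksym y x) distrC => /ltW.
have [hT _] := reg setT measurableT.
have : ((1 - eps)%:E < mu setT)%E by rewrite probability_setT lte_fin; lra.
rewrite hT => /ereal_sup_gt [_ [K [cK _] <-] hK].
have mK := compact_meas cK.
have hmK : 1 - eps < mm mu K by rewrite -lte_fin /mm fineK ?mu_fin.
have cov : K `<=` \bigcup_(c in setT) [set y : Y | d c y < del].
  by move=> y Ky; exists y => //=; rewrite ((deq y y).2 erefl).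
have [J [fJ KJ]] := cK Y (fun c => [set y : Y | d c y < del]) (fun c => ball_open (c:=c) (r:=del)) cov.
have [cs Jcs] := (finite_seqP J).1 fJ; subst J.
have Ksub : K `<=` [set y | exists2 c, c \in cs & d c y < del].
  by move=> y /KJ [c Jc dc]; exists c.
have [s [s0 ssum sapx]] := approx_cs mu hdel mK Ksub.
have hs : 1 - eps <= \sum_(z <- s) z.2 <= 1.
  by rewrite ssum (ltW hmK) mm_le1.
have [n [w [n0 hw]]] := round e0 s0 hs.
exists n, w; split => // x.
have mKc : measurable (~` K) by exact: measurableC.
have IkT : Ik mu setT x = Ik mu K x + Ik mu (~` K) x.
  by rewrite -Ik_add ?setUCr //; exact: setICr.
have mmT : mm mu K + mm mu (~` K) = 1.
  by rewrite -mm_add ?setUCr ?setICr // /mm probability_setT.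
have /andP[c1 c2] := @Ik_bounds mu (~` K) x 0 M mKc (lexx 0)
  (fun y _ => introT andP (conj (k0 x y) (kM x y))).
have hM := M0.
have e1 := sapx x; have e2 := hw x.
have hmK1 := mm_le1 mu mK.
change (potential k mu x) with (Ik mu setT x); rewrite IkT.
move: e1 e2 c1 c2 hmK hmK1 mmT hM.
move: (Ik mu K x) (Ik mu (~` K) x) (mm mu K) (mm mu (~` K)) (\sum_(z <- s) z.2 * k x z.1)
  (disc_potential k w x) => a b p q S D.
rewrite !ler_norml mul0r => /andP[h1 h2] /andP[h3 h4] h5 h6 h7 h8 h9 h10.
have : M * q <= M * eps by apply: ler_wpM2l => //; lra.
have : eps * p <= eps by rewrite ger_pMr // ltW.
move=> h11 h12.
apply/andP; split; nra.
Qed.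


Lemma avg_ge n (f : 'I_n -> R) c : (0 < n)%N -> (forall j, c <= f j) ->
  c <= n%:R^-1 * \sum_(j < n) f j.
Proof.
move=> n0 hf; have nR : 0 < n%:R :> R by rewrite ltr0n.
have : \sum_(j < n) c <= \sum_(j < n) f j by apply: ler_sum => j _.
rewrite sumr_const card_ord => h.
by rewrite -(ler_pM2l nR) mulrA mulfV ?gt_eqF // mul1r mulr_natl.
Qed.

Lemma avg_le n (f : 'I_n -> R) c : (0 < n)%N -> (forall j, f j <= c) ->
  n%:R^-1 * \sum_(j < n) f j <= c.
Proof.
move=> n0 hf; have nR : 0 < n%:R :> R by rewrite ltr0n.
have : \sum_(j < n) f j <= \sum_(j < n) c by apply: ler_sum => j _.
rewrite sumr_const card_ord => h.
by rewrite -(ler_pM2l nR) mulrA mulfV ?gt_eqF // mul1r mulr_natl.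
Qed.

Lemma dp_bounds n (w : 'I_n -> Y) x : (0 < n)%N ->
  0 <= disc_potential k w x <= M.
Proof.
move=> n0; apply/andP; split.
  by apply: avg_ge => // j; exact: k0.
by apply: avg_le => // j; exact: kM.
Qed.

Lemma range_props (f : Y -> R) : (forall x, 0 <= f x <= M) ->
  [/\ range f !=set0, has_lbound (range f), has_ubound (range f),
      forall x, inf (range f) <= f x & forall x, f x <= sup (range f)].
Proof.
move=> hf.
have ne : range f !=set0 by exists (f point), point.
have hl : has_lbound (range f) by exists 0 => _ [x _ <-]; have /andP[] := hf x.
have hu : has_ubound (range f) by exists M => _ [x _ <-]; have /andP[] := hf x.
split => // x.
- by apply: ge_inf => //; exists x.
- by apply: ub_le_sup => //; exists x.
Qed.

Lemma pairing n (w : 'I_n -> Y) m (v : 'I_m -> Y) : (0 < n)%N -> (0 < m)%N ->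
  inf (range (disc_potential k w)) <= sup (range (disc_potential k v)).
Proof.
move=> n0 m0.
have [_ _ _ lw _] := range_props (fun x => dp_bounds w x n0).
have [_ _ _ _ uv] := range_props (fun x => dp_bounds v x m0).
have eq : m%:R^-1 * \sum_(j < m) disc_potential k w (v j) =
          n%:R^-1 * \sum_(i < n) disc_potential k v (w i).
  rewrite /disc_potential !mulr_sumr.
  rewrite (eq_bigr (fun j => \sum_(i < n) (m%:R^-1 * n%:R^-1) * k (v j) (w i))); last first.
    by move=> j _; rewrite mulrA mulr_sumr.
  rewrite [RHS](eq_bigr (fun i => \sum_(j < m) (n%:R^-1 * m%:R^-1) * k (w i) (v j))); last first.
    by move=> i _; rewrite mulrA mulr_sumr.
  rewrite exchange_big; apply: eq_bigr => i _; apply: eq_bigr => j _.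
  by rewrite (mulrC n%:R^-1) ksym.
apply: le_trans (_ : _ <= m%:R^-1 * \sum_(j < m) disc_potential k w (v j)) _.
  by apply: avg_ge => // j; exact: lw.
by rewrite eq; apply: avg_le => // i; exact: uv.
Qed.

Lemma R_nonempty : rendezvous_set k !=set0.
Proof.
pose E := [set t : R | exists n (w : 'I_n -> Y), (0 < n)%N /\ t = inf (range (disc_potential k w))].
pose v0 := fun _ : 'I_1 => (point : Y).
have En : E !=set0 by exists (inf (range (disc_potential k v0))), 1%N, v0.
have Eu : ubound E (sup (range (disc_potential k v0))).
  by move=> _ [n [w [n0 ->]]]; exact: pairing.
exists (sup E) => n w n0; apply/andP; split.
  by apply: ub_le_sup; [exists (sup (range (disc_potential k v0)))|exists n, w].
apply: ge_sup => // _ [m [v [m0 ->]]]; exact: pairing.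
Qed.

Lemma pot_bounds (mu : probability T R) x : 0 <= potential k mu x <= M.
Proof.
have := @Ik_bounds mu setT x 0 M measurableT (lexx 0)
  (fun y _ => introT andP (conj (k0 x y) (kM x y))).
rewrite mul0r /mm probability_setT /= mulr1; exact.
Qed.

Lemma R_sub_A : rendezvous_set k `<=` average_set d k.
Proof.
move=> r Rr mu reg; rewrite /Ameas /hull /=.
have [neP lP uP infP supP] := range_props (pot_bounds mu).
have C0 : 0 < 1 + M + 2 * M by have := M0; lra.
apply/andP; split.
- apply/ler_addgt0Pr => e e0.
  have ee0 : 0 < e / (1 + M + 2 * M) by rewrite divr_gt0.
  have [n [w [n0 hw]]] := approx reg ee0.
  have [neD lD uD infD supD] := range_props (fun x => dp_bounds w x n0).
  have /andP[hr _] := Rr n w n0.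
  have he : e / (1 + M + 2 * M) + M * (e / (1 + M + 2 * M)) +
      2 * M * (e / (1 + M + 2 * M)) = e.
    have hu : (1 + M + 2 * M) * (e / (1 + M + 2 * M)) = e.
      by rewrite mulrCA mulfV ?gt_eqF ?mulr1.
    move: hu; move: (e / _) => u; lra.
  apply: le_trans (_ : _ <= inf (range (disc_potential k w)) + e) _; last by rewrite lerD2r.
  rewrite -lerBlDr; apply: lb_le_inf => // _ [x _ <-].
  have := hw x; have := infP x; rewrite he ler_norml => h1 /andP[h2 h3]; lra.
- apply/ler_addgt0Pr => e e0.
  have ee0 : 0 < e / (1 + M + 2 * M) by rewrite divr_gt0.
  have [n [w [n0 hw]]] := approx reg ee0.
  have [neD lD uD infD supD] := range_props (fun x => dp_bounds w x n0).
  have /andP[_ hr] := Rr n w n0.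
  have he : e / (1 + M + 2 * M) + M * (e / (1 + M + 2 * M)) +
      2 * M * (e / (1 + M + 2 * M)) = e.
    have hu : (1 + M + 2 * M) * (e / (1 + M + 2 * M)) = e.
      by rewrite mulrCA mulfV ?gt_eqF ?mulr1.
    move: hu; move: (e / _) => u; lra.
  apply: le_trans hr _.
  apply: ge_sup => // _ [x _ <-].
  have := hw x; have := supP x; rewrite he ler_norml => h1 /andP[h2 h3].
  lra.
Qed.

End S.

Theorem theorem3p2 (R : realType) (Y : pointedType) (d : Y -> Y -> R)
  (k : Y -> Y -> R) :
  is_metric d ->
  (forall x y, 0 <= k x y) ->
  (forall x y, k x y = k y x) ->
  (exists M : R, forall x y, k x y <= M) ->
  (forall e : R, 0 < e -> exists2 delta : R, 0 < delta &
     forall x x' y, d x x' < delta -> `|k x y - k x' y| < e) ->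
  average_set d k = rendezvous_set k /\ average_set d k !=set0.
Proof.
move=> hd k0 ksym [M kM] keq.
have AR := A_sub_R hd k0 ksym keq.
have RA := R_sub_A hd k0 ksym kM keq.
split; first by apply/seteqP; split.
have [r Rr] := R_nonempty k0 ksym kM.
by exists r; exact: RA.
Qed.
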